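(* For all $n\ge3$, the number $|\mathcal C_n^*|$ of essential lattice congruences of the weak order on $S_n$ satisfies $2^{2^{n-2}}\le|\mathcal C_n^*|\le 2^{2^n-2n}$. Since distinct congruences have distinct vertex sets, this is also the number $|\mathcal Q_n|$ of quotient graphs $Q_R$, $R\in\mathcal C_n^*$.
   Context: $S_n$ is the set of permutations of $[n]$ with the weak order (inclusion of inversion sets); a lattice congruence is an equivalence relation compatible with joins and meets. Fences. $]a,b[=\{a+1,\dots,b-1\}$. For $1\le a<b\le n$ and $L\subseteq\,]a,b[$, the fence $f(a,b,L)$ is the set of cover edges joining two permutations that differ by swapping adjacent entries $a,b$, with the values of $L$ to the left of $a,b$ and those of $]a,b[\setminus L$ to the right. Forcing order: $f(a,b,L)\prec f(c,d,M)$ iff $a\le c<d\le b$, $(a,b)\ne(c,d)$, $M=L\cap\,]c,d[$. Reading's theorem. Lattice congruences $R$ correspond bijectively to downsets $F_R$ of the forcing order; a cover edge joins $R$-equivalent permutations iff it lies in a fence of $F_R$. $R$ is essential if $F_R$ contains no fence $f(a,a+1,\emptyset)$; $\mathcal C_n^*$ is the set of essential lattice congruences. The quotient graph $Q_R$ is the undirected cover graph of the lattice quotient $S_n/R$ (vertices are the classes). *)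

(* Defs.v *)
From mathcomp Require Import all_boot fingroup perm.
Set Implicit Arguments. Unset Strict Implicit. Unset Printing Implicit Defensive.

(* Permutations of [n] are encoded as w : {perm 'I_n}, with values 0..n-1
   (value v stands for v+1); the one-line notation is w 0, w 1, ..., w (n-1)
   (w maps positions to values). *)

Definition inv_set n (w : {perm 'I_n}) : {set 'I_n * 'I_n} :=
  [set p : 'I_n * 'I_n | (p.1 < p.2) && ((w^-1)%g p.2 < (w^-1)%g p.1)].

Definition weak_le n (u v : {perm 'I_n}) : bool := inv_set u \subset inv_set v.

Definition is_join n (x y j : {perm 'I_n}) : bool :=
  [&& weak_le x j, weak_le y j &
      [forall z, weak_le x z ==> weak_le y z ==> weak_le j z]].

Definition is_meet n (x y m : {perm 'I_n}) : bool :=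
  [&& weak_le m x, weak_le m y &
      [forall z, weak_le z x ==> weak_le z y ==> weak_le z m]].

Definition relS n := {ffun {perm 'I_n} * {perm 'I_n} -> bool}.

Definition equivalence_rel n (R : relS n) : bool :=
  [&& [forall x, R (x, x)],
      [forall x, forall y, R (x, y) ==> R (y, x)] &
      [forall x, forall y, forall z, R (x, y) ==> R (y, z) ==> R (x, z)]].

Definition lattice_congruence n (R : relS n) : bool :=
  [&& equivalence_rel R,
      [forall x, forall y, forall z, forall j1, forall j2,
         R (x, y) ==> is_join x z j1 ==> is_join y z j2 ==> R (j1, j2)] &
      [forall x, forall y, forall z, forall m1, forall m2,
         R (x, y) ==> is_meet x z m1 ==> is_meet y z m2 ==> R (m1, m2)]].

(* Essential: F_R contains no fence f(a,a+1,emptyset), i.e. no cover edge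
   swapping two adjacent entries with consecutive values a, a+1 joins
   R-equivalent permutations.  Swapping positions i, i+1 of w gives
   tperm i j * w (since (s * t) k = t (s k)). *)
Definition essential n (R : relS n) : bool :=
  [forall i : 'I_n, forall j : 'I_n, forall w : {perm 'I_n},
     ((val j == (val i).+1) &&
      ((val (w j) == (val (w i)).+1) || (val (w i) == (val (w j)).+1)))
     ==> ~~ R (w, (tperm i j * w)%g)].

Definition essential_congruences n : {set relS n} :=
  [set R : relS n | lattice_congruence R && essential R].

(* Main.v *)
Require Import Defs.
From mathcomp Require Import all_boot fingroup perm zify.
Set Implicit Arguments. Unset Strict Implicit. Unset Printing Implicit Defensive.

Definition invr n (w : {perm 'I_n}) (a b : 'I_n) : bool :=
  (a < b) && ((w^-1)%g b < (w^-1)%g a).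

Lemma weak_leP n (u v : {perm 'I_n}) :
  reflect (forall a b, invr u a b -> invr v a b) (weak_le u v).
Proof.
apply: (iffP subsetP) => H.
  by move=> a b h; have := H (a, b); rewrite !inE; apply.
by move=> [a b]; rewrite !inE; apply: H.
Qed.

Lemma weak_le_refl n (u : {perm 'I_n}) : weak_le u u.
Proof. exact: subxx. Qed.

Lemma weak_le_trans n (u v w : {perm 'I_n}) : weak_le u v -> weak_le v w -> weak_le u w.
Proof. exact: subset_trans. Qed.

Lemma incr_perm_id n (f : {perm 'I_n}) :
  (forall x y : 'I_n, (x < y) = (f x < f y)) -> f = 1%g.
Proof.
have ge : forall g : {perm 'I_n}, (forall x y : 'I_n, (x < y) = (g x < g y)) ->
   forall k (x : 'I_n), val x = k -> x <= g x.
  move=> g Hg; elim=> [|k IH] x hx; first by rewrite hx.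
  have hk : k < n by rewrite -ltnS -hx; exact: ltnW (ltn_ord x).
  have := IH (Ordinal hk) erefl.
  have : Ordinal hk < x by rewrite /= hx.
  rewrite Hg => h1 h2; rewrite hx; exact: leq_ltn_trans h2 h1.
move=> H.
have H' : forall x y : 'I_n, (x < y) = (f^-1%g x < f^-1%g y).
  by move=> x y; rewrite [RHS]H !permKV.
apply/permP => x; rewrite perm1; apply/val_inj/eqP; rewrite eqn_leq.
rewrite (ge f H _ x erefl) andbT.
by have := ge _ H' _ (f x) erefl; rewrite permK.
Qed.

Lemma perm_order_inj n (s s' : {perm 'I_n}) :
  (forall x y, (s x < s y) = (s' x < s' y)) -> s = s'.
Proof.
move=> H.
have Hf : (s^-1 * s')%g = 1%g.
  apply: incr_perm_id => x y; rewrite !permM -H !permKV //.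
apply/permP => x; have := congr1 (fun g : {perm 'I_n} => g (s x)) Hf.
by rewrite permM perm1 permK.
Qed.

Lemma ltn_perm n (s : {perm 'I_n}) x y : x != y -> (s x < s y) = ~~ (s y < s x).
Proof.
move=> nxy; have ne : s x != s y by rewrite (inj_eq perm_inj).
by rewrite -leqNgt ltn_neqAle ne.
Qed.

Lemma inv_set_inj n (u v : {perm 'I_n}) : inv_set u = inv_set v -> u = v.
Proof.
move=> E.
have Ei : forall a b, invr u a b = invr v a b.
  by move=> a b; have := congr1 (fun A : {set 'I_n * 'I_n} => (a, b) \in A) E; rewrite !inE.
suff : (u^-1)%g = (v^-1)%g by move/(congr1 (fun g => g^-1)%g); rewrite !invgK.
apply: perm_order_inj => x y.
case: (ltngtP x y) => hxy.
- have := Ei x y; rewrite /invr hxy /= => e.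
  rewrite ltn_perm ?e -?ltn_perm //; last by rewrite neq_ltn hxy.
  by rewrite neq_ltn hxy.
- by have := Ei y x; rewrite /invr hxy.
- have -> : x = y by exact: val_inj.
  by rewrite !ltnn.
Qed.

Lemma weak_le_anti n (u v : {perm 'I_n}) : weak_le u v -> weak_le v u -> u = v.
Proof. by move=> h1 h2; apply: inv_set_inj; apply/eqP; rewrite eqEsubset; apply/andP. Qed.

Lemma realize_bef n (bef : rel 'I_n) :
  irreflexive bef -> transitive bef -> (forall x y, x != y -> bef x y || bef y x) ->
  exists s : {perm 'I_n}, forall x y, (s x < s y) = bef x y.
Proof.
move=> irr tr tot.
pose pos x := #|[set t | bef t x]|.
have posn : forall x, pos x < n.
  move=> x; rewrite -[n]card_ord -cardsT; apply: proper_card.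
  rewrite properT; apply/eqP => /setP /(_ x); by rewrite !inE irr.
have key : forall x y, bef x y -> pos x < pos y.
  move=> x y bxy; apply: proper_card; apply/properP; split.
    by apply/subsetP => t; rewrite !inE => bt; apply: tr bxy.
  by exists x; rewrite !inE ?irr.
have key2 : forall x y, (pos x < pos y) = bef x y.
  move=> x y; apply/idP/idP; last exact: key.
  case: (eqVneq x y) => [-> | nxy]; first by rewrite ltnn.
  move: (tot x y nxy); case/orP => // byx /(ltn_trans (key _ _ byx)).
  by rewrite ltnn.
pose f x := Ordinal (posn x).
have finj : injective f.
  move=> x y /(congr1 val) /= e; apply/eqP; apply: contraT => nxy.
  move: (tot x y nxy); rewrite -!key2 e ltnn; done.
exists (perm finj) => x y; by rewrite !permE /= key2.
Qed.

Lemma realize_inv n (I : rel 'I_n) :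
  (forall a b c : 'I_n, a < b -> b < c -> I a b -> I b c -> I a c) ->
  (forall a b c : 'I_n, a < b -> b < c -> I a c -> I a b || I b c) ->
  exists w : {perm 'I_n}, forall a b : 'I_n, a < b -> invr w a b = I a b.
Proof.
move=> tr cotr.
pose bef (x y : 'I_n) := if x < y then ~~ I x y else if y < x then I y x else false.
have irr : irreflexive bef by move=> x; rewrite /bef ltnn.
have tot : forall x y, x != y -> bef x y || bef y x.
  move=> x y; rewrite /bef; case: (ltngtP x y) => h //.
  - by case: (I x y).
  - by case: (I y x).
  - by move=> /eqP []; apply: val_inj.
have trb : transitive bef.
  move=> y x z; rewrite /bef.
  case: (ltngtP x y) => hxy //; case: (ltngtP y z) => hyz //.
  - move=> nxy nyz; have hxz : x < z by apply: ltn_trans hyz.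
    rewrite hxz; apply: contra nxy => ixz.
    by move: (cotr _ _ _ hxy hyz ixz); rewrite (negbTE nyz) orbF.
  - move=> nxy izy; case: (ltngtP x z) => hxz.
    + by apply: contra nxy => ixz; apply: tr hxz hyz ixz izy.
    + by move: (cotr _ _ _ hxz hxy izy); rewrite (negbTE nxy) orbF.
    + have e : x = z by apply: val_inj.
      by subst z; rewrite izy in nxy.
  - move=> iyx nyz; case: (ltngtP x z) => hxz.
    + by apply: contra nyz => ixz; apply: tr hxy hxz iyx ixz.
    + by move: (cotr _ _ _ hyz hxz iyx); rewrite (negbTE nyz).
    + have e : x = z by apply: val_inj.
      by subst z; rewrite iyx in nyz.
  - move=> iyx izy; have hzx : z < x by apply: ltn_trans hxy.
    by rewrite ltnNge (ltnW hzx) /= hzx; apply: tr hyz hxy izy iyx.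
have [s Hs] := realize_bef irr trb tot.
exists (s^-1)%g => a b hab; rewrite /invr invgK hab Hs /bef.
by rewrite ltnNge (ltnW hab) /= hab.
Qed.

Definition ninv n (w : {perm 'I_n}) (a b : 'I_n) : bool :=
  (a < b) && ((w^-1)%g a < (w^-1)%g b).

Lemma invr_ninv n (w : {perm 'I_n}) (a b : 'I_n) : a < b -> invr w a b = ~~ ninv w a b.
Proof.
move=> hab; rewrite /invr /ninv hab /= ltn_perm //.
by rewrite neq_ltn hab orbT.
Qed.

Definition cotrans n (P : rel 'I_n) :=
  forall a b c : 'I_n, a < b -> b < c -> P a c -> P a b || P b c.

Definition clo n (U : rel 'I_n) (a b : 'I_n) := (a < b) && connect U a b.

Lemma clo_cotr n (A B : rel 'I_n) :
  cotrans A -> cotrans B -> cotrans (clo [rel a b | A a b || B a b]).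
Proof.
move=> cA cB a b c hab hbc /andP [hac /connectP [p pth lst]].
elim: p a hab hac pth lst => [|c1 p IH] a hab hac /=.
  move=> _ e; subst c; by move: (ltn_trans hab hbc); rewrite ltnn.
case/andP => uac1 pth lst.
have cc1 : connect [rel a b | A a b || B a b] c1 c by apply/connectP; exists p.
case: (ltngtP b c1) => h.
- have : (A a b || A b c1) || (B a b || B b c1).
    by case/orP: uac1 => u; [rewrite (cA _ _ _ hab h u) | rewrite (cB _ _ _ hab h u) orbT].
  rewrite /clo hab hbc /= => hh.
  have [hab'|hbc'] : connect [rel a b | A a b || B a b] a b \/
                     connect [rel a b | A a b || B a b] b c1.
    by case/orP: hh => /orP [] u; [left|right|left|right]; apply: connect1; rewrite /= u ?orbT.
    by rewrite hab'.
  by rewrite (connect_trans hbc' cc1) orbT.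
- have hc1c : c1 < c by apply: ltn_trans hbc.
  case/orP: (IH c1 h hc1c pth lst) => [/andP [_ cb] | ->]; last by rewrite orbT.
  have ac1 : connect [rel a b | A a b || B a b] a c1 by apply: connect1.
  by rewrite /clo hab (connect_trans ac1 cb).
- have e : b = c1 by apply: val_inj.
  by subst c1; rewrite /clo hab connect1.
Qed.

Lemma ninv_cotr n (w : {perm 'I_n}) : cotrans (ninv w).
Proof.
move=> a b c hab hbc /andP [_ h]; rewrite /ninv hab hbc /=.
case: (ltnP ((w^-1)%g a) ((w^-1)%g b)) => // h2.
by rewrite (leq_ltn_trans h2 h).
Qed.

Lemma meet_exists n (x z : {perm 'I_n}) : exists m, is_meet x z m.
Proof.
pose U := [rel a b : 'I_n | ninv x a b || ninv z a b].
pose I := fun a b : 'I_n => ~~ clo U a b.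
have cc := clo_cotr (@ninv_cotr n x) (@ninv_cotr n z).
have [m Hm] : exists w : {perm 'I_n}, forall a b : 'I_n, a < b -> invr w a b = I a b.
  apply: realize_inv.
    move=> a b c hab hbc iab ibc; rewrite /I; apply/negP => cac.
    by move: (cc _ _ _ hab hbc cac); rewrite /I in iab ibc; rewrite (negbTE iab) (negbTE ibc).
  move=> a b c hab hbc; rewrite /I -negb_and; apply: contra => /andP [/andP [_ c1] /andP [_ c2]].
  by rewrite /clo (ltn_trans hab hbc) (connect_trans c1 c2).
have lo : forall y : {perm 'I_n}, (forall a b : 'I_n, a < b -> ninv y a b -> U a b) -> weak_le m y.
  move=> y Hy; apply/weak_leP => a b hm.
  have hab : a < b by case/andP: hm.
  rewrite invr_ninv //; apply/negP => ny.
  move: hm; rewrite Hm // /I /clo hab connect1 //=.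
  exact: Hy.
exists m; rewrite /is_meet; apply/and3P; split.
- by apply: lo => a b _ h; rewrite /= h.
- by apply: lo => a b _ h; rewrite /= h orbT.
apply/forallP => w; apply/implyP => hw1; apply/implyP => hw2.
apply/weak_leP => a b hw; have hab : a < b by case/andP: hw.
rewrite Hm // /I /clo hab /=; apply/negP => /connectP [p pth lst].
have sub : forall c d, U c d -> ninv w c d.
  move=> c d /orP [] /[dup] /andP [hcd _]; rewrite -(negbK (ninv _ c d)) -invr_ninv //;
  rewrite -(negbK (ninv w c d)) -invr_ninv //; apply: contra.
  - by move/weak_leP: hw1; apply.
  - by move/weak_leP: hw2; apply.
have ntr : forall c d e, ninv w c d -> ninv w d e -> ninv w c e.
  move=> c d e /andP [h1 h2] /andP [h3 h4].
  by rewrite /ninv (ltn_trans h1 h3) (ltn_trans h2 h4).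
have key : forall q c, path U c q -> (c == last c q) || ninv w c (last c q).
  elim=> [|c1 q IH] c /=; first by rewrite eqxx.
  case/andP => u pq; have n1 := sub _ _ u.
  case/orP: (IH c1 pq) => [/eqP <-|n2]; first by rewrite n1 orbT.
  by rewrite (ntr _ _ _ n1 n2) orbT.
move: (key p a pth); rewrite -lst; case/orP => [/eqP e|].
  by rewrite -e ltnn in hab.
by rewrite -(negbK (ninv w a b)) -invr_ninv // hw.
Qed.

Definition dsw n (w : {perm 'I_n}) (i j : 'I_n) : {perm 'I_n} := (tperm i j * w)%g.

Lemma dsw_inv n (w : {perm 'I_n}) i j x :
  ((dsw w i j)^-1)%g x = tperm i j ((w^-1)%g x).
Proof. by rewrite /dsw invMg permM tpermV. Qed.

Lemma dsw_val n (w : {perm 'I_n}) i j p : dsw w i j p = w (tperm i j p).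
Proof. by rewrite /dsw permM. Qed.

Definition pairpos n (p q i j : 'I_n) :=
  ((p == i) && (q == j)) || ((p == j) && (q == i)).

Lemma tperm_ltn n (i j p q : 'I_n) : j = i.+1 :> nat -> ~~ pairpos p q i j ->
  (tperm i j p < tperm i j q) = (p < q).
Proof.
move=> hj; rewrite /pairpos.
case: tpermP => [->|->|/eqP hpi /eqP hpj]; case: tpermP => [->|->|/eqP hqi /eqP hqj];
  rewrite ?eqxx //= ?andbT ?andbF ?orbF //.
all: repeat match goal with H : is_true (_ != _) |- _ => move: H end.
all: rewrite -!val_eqE /= ?hj.
all: try change (\val i) with (nat_of_ord i).
all: try change (\val p) with (nat_of_ord p).
all: try change (\val q) with (nat_of_ord q).
all: try (move=> *; apply/idP/idP; lia).
all: move=> h1 h2 _; move/eqP: h1 => h1; move/eqP: h2 => h2; apply/idP/idP => h3; lia.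
Qed.

Lemma pairposC n (p q i j : 'I_n) : pairpos p q i j = pairpos q p i j.
Proof. by rewrite /pairpos orbC [(q == i) && _]andbC [(q == j) && _]andbC. Qed.

Lemma invr_dsw_pres n (w : {perm 'I_n}) (i j a b : 'I_n) : j = i.+1 :> nat ->
  ~~ pairpos ((w^-1)%g a) ((w^-1)%g b) i j -> invr (dsw w i j) a b = invr w a b.
Proof.
by move=> hj hp; rewrite /invr !dsw_inv tperm_ltn // pairposC.
Qed.

Lemma invr_dsw_flip n (w : {perm 'I_n}) (i j a b : 'I_n) : j = i.+1 :> nat -> a < b ->
  pairpos ((w^-1)%g a) ((w^-1)%g b) i j -> invr (dsw w i j) a b = ~~ invr w a b.
Proof.
move=> hj hab; rewrite /invr !dsw_inv hab /=.
case/orP => /andP [/eqP -> /eqP ->]; rewrite ?tpermL ?tpermR hj; lia.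
Qed.

Lemma cover n (u v : {perm 'I_n}) : weak_le u v -> u != v ->
  exists i j : 'I_n, [/\ j = i.+1 :> nat, v j < v i & weak_le u (dsw v i j)].
Proof.
move=> luv nuv.
have : ~~ weak_le v u by apply: contra nuv => lvu; rewrite (weak_le_anti luv lvu).
case/subsetPn => [[a b]]; rewrite !inE /= => hv hu.
have hab : a < b by case/andP: hv.
have walk : forall k (p q : 'I_n), q - p = k -> p < q ->
    (u^-1)%g (v q) < (u^-1)%g (v p) ->
    exists r s : 'I_n, [/\ s = r.+1 :> nat, p <= r, s <= q &
                         (u^-1)%g (v s) < (u^-1)%g (v r)].
  elim=> [|k IH] p q hk hpq hu'; first by move: hpq; lia.
  case: (eqVneq (q : nat) p.+1) => hq.
    by exists p, q; split.
  have hp1 : p.+1 < n by have := ltn_ord q; move: hq; rewrite neq_ltn; lia.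
  pose p1 := Ordinal hp1.
  case: (ltnP ((u^-1)%g (v p1)) ((u^-1)%g (v p))) => h.
    by exists p, p1; split => //=; lia.
  have h' : (u^-1)%g (v q) < (u^-1)%g (v p1) by apply: leq_trans h.
  have [|||r [s [h1 h2 h3 h4]]] := IH p1 q.
  - by rewrite /=; lia.
  - by rewrite /=; lia.
  - exact: h'.
  by exists r, s; split => //; move: h2; rewrite /=; lia.
have hvab : (v^-1)%g b < (v^-1)%g a by case/andP: hv.
have hu2 : (u^-1)%g (v ((v^-1)%g a)) < (u^-1)%g (v ((v^-1)%g b)).
  rewrite !permKV ltn_perm; last by rewrite neq_ltn hab.
  by move: hu; rewrite hab.
have [r [s [hs _ _ hrs]]] := walk _ _ _ erefl hvab hu2.
have nrs : r != s by apply/eqP => e; subst s; move: hs; lia.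
have hvs : v s < v r.
  rewrite ltn_perm // -1?(inj_eq perm_inj) 1?eq_sym //.
  apply/negP => hvr.
  have : invr u (v r) (v s) by rewrite /invr hvr.
  move/weak_leP: luv => luv /luv; rewrite /invr !permK hvr /=; lia.
exists r, s; split => //.
apply/weak_leP => a' b' hu'.
have hv' : invr v a' b' by move/weak_leP: luv; apply.
case pp : (pairpos ((v^-1)%g a') ((v^-1)%g b') r s); last first.
  by rewrite invr_dsw_pres ?pp.
exfalso; move: pp hv' hu'; rewrite /pairpos.
case/orP => /andP [/eqP ea /eqP eb].
  by rewrite /invr ea eb; lia.
rewrite /invr ea eb => /andP [hab' _].
have -> : a' = v s by rewrite -ea permKV.
have -> : b' = v r by rewrite -eb permKV.
move=> /andP [_ h]; move: h hrs; lia.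
Qed.

Lemma pairpos_invr n (v : {perm 'I_n}) (i j a b : 'I_n) : a < b -> v j < v i ->
  pairpos ((v^-1)%g a) ((v^-1)%g b) i j -> (v^-1)%g a = j /\ (v^-1)%g b = i.
Proof.
move=> hab hv; case/orP => /andP [/eqP ea /eqP eb]; last by [].
have ha : a = v i by rewrite -ea permKV.
have hb : b = v j by rewrite -eb permKV.
by move: hab hv; rewrite ha hb; lia.
Qed.

Lemma dsw_le n (v : {perm 'I_n}) (i j : 'I_n) : j = i.+1 :> nat -> v j < v i ->
  weak_le (dsw v i j) v.
Proof.
move=> hj hv; apply/weak_leP => a b h.
have hab : a < b by case/andP: h.
case pp : (pairpos ((v^-1)%g a) ((v^-1)%g b) i j); last first.
  by rewrite -(invr_dsw_pres (w:=v) (a:=a) (b:=b) hj) ?pp.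
have [ea eb] := pairpos_invr hab hv pp.
by rewrite /invr hab ea eb hj /= ltnSn.
Qed.

Lemma two_desc_join n (v : {perm 'I_n}) (i j i' j' : 'I_n) :
  j = i.+1 :> nat -> j' = i'.+1 :> nat -> v j < v i -> v j' < v i' -> i != i' ->
  is_join (dsw v i j) (dsw v i' j') v.
Proof.
move=> hj hj' hv hv' nii; rewrite /is_join (dsw_le hj hv) (dsw_le hj' hv') /=.
apply/forallP => z; apply/implyP => h1; apply/implyP => h2.
apply/weak_leP => a b h; have hab : a < b by case/andP: h.
case pp : (pairpos ((v^-1)%g a) ((v^-1)%g b) i j).
  have [ea eb] := pairpos_invr hab hv pp.
  case pp' : (pairpos ((v^-1)%g a) ((v^-1)%g b) i' j').
    have [ea' eb'] := pairpos_invr hab hv' pp'.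
    by move: nii; rewrite -eb -eb' eqxx.
  by move/weak_leP: h2; apply; rewrite (invr_dsw_pres (w:=v) (a:=a) (b:=b) _) ?pp'.
by move/weak_leP: h1; apply; rewrite (invr_dsw_pres (w:=v) (a:=a) (b:=b) _) ?pp.
Qed.

Lemma lc_refl n (R : relS n) : lattice_congruence R -> forall x, R (x, x).
Proof. by case/and3P => /and3P [/forallP h _ _] _ _. Qed.

Lemma lc_sym n (R : relS n) : lattice_congruence R -> forall x y, R (x, y) -> R (y, x).
Proof.
case/and3P => /and3P [_ /forallP h _] _ _ x y.
by move: (h x) => /forallP /(_ y) /implyP.
Qed.

Lemma lc_trans n (R : relS n) : lattice_congruence R ->
  forall x y z, R (x, y) -> R (y, z) -> R (x, z).
Proof.
case/and3P => /and3P [_ _ /forallP h] _ _ x y z.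
by move: (h x) => /forallP /(_ y) /forallP /(_ z) /implyP hh /hh /implyP.
Qed.

Lemma lc_join n (R : relS n) : lattice_congruence R ->
  forall x y z j1 j2, R (x, y) -> is_join x z j1 -> is_join y z j2 -> R (j1, j2).
Proof.
case/and3P => _ /forallP h _ x y z j1 j2.
move: (h x) => /forallP /(_ y) /forallP /(_ z) /forallP /(_ j1) /forallP /(_ j2).
by move=> /implyP hh /hh /implyP hh2 /hh2 /implyP.
Qed.

Lemma lc_meet n (R : relS n) : lattice_congruence R ->
  forall x y z m1 m2, R (x, y) -> is_meet x z m1 -> is_meet y z m2 -> R (m1, m2).
Proof.
case/and3P => _ _ /forallP h x y z m1 m2.
move: (h x) => /forallP /(_ y) /forallP /(_ z) /forallP /(_ m1) /forallP /(_ m2).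
by move=> /implyP hh /hh /implyP hh2 /hh2 /implyP.
Qed.

Lemma is_meet_le n (u a : {perm 'I_n}) : weak_le u a -> is_meet u a u.
Proof.
move=> h; rewrite /is_meet weak_le_refl h /=.
by apply/forallP => z; apply/implyP => h1; apply/implyP.
Qed.

Lemma is_meet_ge n (u a : {perm 'I_n}) : weak_le a u -> is_meet u a a.
Proof.
move=> h; rewrite /is_meet weak_le_refl h /=.
by apply/forallP => z; apply/implyP => h1; apply/implyP.
Qed.

Lemma is_join_ge n (c a : {perm 'I_n}) : weak_le c a -> is_join c a a.
Proof.
move=> h; rewrite /is_join weak_le_refl h /=.
by apply/forallP => z; apply/implyP => h1; apply/implyP.
Qed.

Lemma is_meetC n (x z m : {perm 'I_n}) : is_meet x z m -> is_meet z x m.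
Proof.
case/and3P => h1 h2 /forallP h3; rewrite /is_meet h1 h2 /=.
apply/forallP => w; apply/implyP => a; apply/implyP => b.
by move: (h3 w); rewrite b a.
Qed.

Lemma is_meet_le1 n (x z m : {perm 'I_n}) : is_meet x z m -> weak_le m x.
Proof. by case/and3P. Qed.

Lemma is_meet_le2 n (x z m : {perm 'I_n}) : is_meet x z m -> weak_le m z.
Proof. by case/and3P. Qed.

Lemma is_meet_min n (x z m w : {perm 'I_n}) : is_meet x z m -> weak_le w x -> weak_le w z -> weak_le w m.
Proof. by case/and3P => _ _ /forallP /(_ w) /implyP h /h /implyP. Qed.

Lemma is_join_le1 n (x z j : {perm 'I_n}) : is_join x z j -> weak_le x j.
Proof. by case/and3P. Qed.

Lemma is_join_le2 n (x z j : {perm 'I_n}) : is_join x z j -> weak_le z j.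
Proof. by case/and3P. Qed.

Lemma is_join_min n (x z j w : {perm 'I_n}) : is_join x z j -> weak_le x w -> weak_le z w -> weak_le j w.
Proof. by case/and3P => _ _ /forallP /(_ w) /implyP h /h /implyP. Qed.

Lemma card_inv_lt n (u v : {perm 'I_n}) : weak_le u v -> u != v -> #|inv_set u| < #|inv_set v|.
Proof.
move=> h ne; apply: proper_card; rewrite properEneq; apply/andP; split => //.
by apply: contra ne => /eqP /inv_set_inj ->.
Qed.

Definition nodesc_except n (v : {perm 'I_n}) (i : 'I_n) : bool :=
  [forall p : 'I_n, forall q : 'I_n, ((q : nat) == p.+1) ==> (p != i) ==> (v p < v q)].

Definition onedesc n (v : {perm 'I_n}) (i j : 'I_n) : bool :=
  [&& (j : nat) == i.+1, v j < v i & nodesc_except v i].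

Lemma determ n (R R' : relS n) : lattice_congruence R -> lattice_congruence R' ->
  (forall v i j, onedesc v i j -> R (v, dsw v i j) -> R' (v, dsw v i j)) ->
  forall x y, R (x, y) -> R' (x, y).
Proof.
move=> lR lR' H.
have main : forall k (v u : {perm 'I_n}), #|inv_set v| <= k -> weak_le u v ->
    R (u, v) -> R' (u, v).
  { elim=> [|k IH] v u hk luv ruv.
  all: case: (eqVneq u v) => [-> | nuv]; first exact: (lc_refl lR').
  all: have [i [j [hj hv lua]]] := cover luv nuv.
  all: have lav := dsw_le hj hv.
  all: have nav : dsw v i j != v by
         apply/eqP => e; move: (hv); rewrite -{1}e dsw_val tpermR -{2}e dsw_val tpermL ltnNge (ltnW hv).
  all: have ca := card_inv_lt lav nav.
  1: by move: hk; rewrite leqn0 => /eqP e; rewrite e in ca.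
  set a := dsw v i j in lua lav nav ca.
  have rua : R (u, a) by apply: (lc_meet lR ruv (is_meet_le lua) (is_meet_ge lav)).
  have r'ua : R' (u, a) by apply: IH lua rua; have := leq_trans ca hk; rewrite ltnS.
  case: (boolP [exists i' : 'I_n, exists j' : 'I_n,
                  [&& (j' : nat) == i'.+1, v j' < v i' & i' != i]]).
    case/existsP => i' /existsP [j' /and3P [/eqP hj' hv' nii]].
    set b := dsw v i' j'.
    have lbv := dsw_le hj' hv'.
    have nbv : b != v by
         apply/eqP => e; move: (hv'); rewrite -{1}e dsw_val tpermR -{2}e dsw_val tpermL ltnNge (ltnW hv').
    have cb := card_inv_lt lbv nbv.
    have [c hc] := meet_exists u b.
    have rcb : R (c, b) by apply: (lc_meet lR ruv hc (is_meet_ge lbv)).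
    have r'cb : R' (c, b) by apply: IH (is_meet_le2 hc) rcb; have := leq_trans cb hk; rewrite ltnS.
    have lca : weak_le c a := weak_le_trans (is_meet_le1 hc) lua.
    have r'av : R' (a, v).
      apply: (lc_join lR' r'cb (is_join_ge lca)).
      exact: two_desc_join hj' hj hv' hv nii.
    exact: (@lc_trans _ R' lR' u a v r'ua r'av).
  rewrite negb_exists => /forallP nod.
  have od : onedesc v i j.
    rewrite /onedesc hj eqxx hv /=; apply/forallP => p; apply/forallP => q.
    apply/implyP => /eqP hq; apply/implyP => npi.
    move: (nod p) => /existsPn /(_ q); rewrite hq eqxx npi andbT /= -leqNgt leq_eqVlt.
    case/orP => // /eqP e0; have e := perm_inj (val_inj e0); move: hq; rewrite e; lia.
  have rva : R (v, a) := (@lc_trans _ R lR v u a (lc_sym lR ruv) rua).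
  have r'va := H v i j od rva.
  exact: (@lc_trans _ R' lR' u a v r'ua (lc_sym lR' r'va)). }
move=> x y rxy.
have [m hm] := meet_exists x y.
have rmy : R (m, y) by apply: (lc_meet lR rxy hm (is_meet_le (weak_le_refl y))).
have rmx : R (m, x).
  by apply: (lc_meet lR (lc_sym lR rxy) (is_meetC hm) (is_meet_le (weak_le_refl x))).
have r'my := main _ _ _ (leqnn _) (is_meet_le2 hm) rmy.
have r'mx := main _ _ _ (leqnn _) (is_meet_le1 hm) rmx.
exact: (@lc_trans _ R' lR' x m y (lc_sym lR' r'mx) r'my).
Qed.

Lemma mono_block n (v : {perm 'I_n}) (i : 'I_n) : nodesc_except v i ->
  forall k (p q : 'I_n), q - p = k -> p < q -> (q <= i) || (i < p) -> v p < v q.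
Proof.
move=> nd; elim=> [|k IH] p q hk hpq hb; first by move: hpq hk; lia.
have npi : p != i.
  by apply/eqP => e; subst p; move: hb hpq; rewrite ltnn orbF; lia.
case: (eqVneq (q : nat) p.+1) => hq.
  by move/forallP: nd => /(_ p) /forallP /(_ q) /implyP /(_ (introT eqP hq)) /implyP /(_ npi).
have hp1 : p.+1 < n by have := ltn_ord q; move: hq hpq; rewrite neq_ltn; lia.
pose p1 := Ordinal hp1.
have h1 : v p < v p1.
  by move/forallP: nd => /(_ p) /forallP /(_ p1) /implyP /(_ (eqxx _)) /implyP /(_ npi).
apply: (ltn_trans h1); apply: IH => /=.
- by move: hk; lia.
- by move: hq hpq; rewrite neq_ltn; lia.
- case/orP: hb => h; first by rewrite h.
  by apply/orP; right; rewrite /=; lia.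
Qed.

Lemma block_order n (v : {perm 'I_n}) (i : 'I_n) : nodesc_except v i ->
  forall p q : 'I_n, ((p <= i) && (q <= i)) || ((i < p) && (i < q)) ->
  (p < q) = (v p < v q).
Proof.
move=> nd p q hb.
case: (ltngtP p q) => h.
- by rewrite (mono_block nd erefl h) //; case/orP: hb => /andP [h1 h2]; rewrite ?h2 ?h1 ?orbT.
- by rewrite ltnNge (ltnW (mono_block nd erefl h _)) //;
     case/orP: hb => /andP [h1 h2]; rewrite ?h2 ?h1 ?orbT.
- have -> : p = q by apply: val_inj.
  by rewrite !ltnn.
Qed.

Definition firstblock n (v : {perm 'I_n}) (i : 'I_n) : {set 'I_n} :=
  [set x | (v^-1)%g x <= i].

Definition bkey n (A : {set 'I_n}) (x : 'I_n) : nat := (x \notin A) * n + x.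

Lemma onedesc_key n (v : {perm 'I_n}) (i j : 'I_n) : onedesc v i j ->
  forall x y, ((v^-1)%g x < (v^-1)%g y) =
              (bkey (firstblock v i) x < bkey (firstblock v i) y).
Proof.
case/and3P => _ _ nd x y; rewrite /bkey !inE.
have bo := @block_order _ v i nd ((v^-1)%g x) ((v^-1)%g y); rewrite !permKV in bo.
have hx := ltn_ord x; have hy := ltn_ord y.
case: (leqP ((v^-1)%g x) i) => h1; case: (leqP ((v^-1)%g y) i) => h2 /=.
- by rewrite bo ?h1 ?h2.
- by rewrite (leq_ltn_trans h1 h2); lia.
- by rewrite ltnNge (ltnW (leq_ltn_trans h2 h1)); lia.
- by rewrite bo ?h1 ?h2 ?orbT //; lia.
Qed.

Lemma onedesc_uniq n (v v' : {perm 'I_n}) (i j i' j' : 'I_n) :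
  onedesc v i j -> onedesc v' i' j' -> firstblock v i = firstblock v' i' ->
  v = v' /\ i = i'.
Proof.
move=> o o' e.
have ei : (v^-1)%g = (v'^-1)%g.
  by apply: perm_order_inj => x y; rewrite (onedesc_key o) (onedesc_key o') e.
have ev : v = v' by rewrite -(invgK v) ei invgK.
split => //; subst v'.
apply/eqP; apply: contraT => nii.
case/and3P: o => /eqP hj hv _; case/and3P: o' => _ _ /forallP /(_ i) /forallP /(_ j).
rewrite hj eqxx /= => /implyP /(_ nii); rewrite ltnNge (ltnW hv); done.
Qed.

Definition initial n (A : {set 'I_n}) :=
  [exists k : 'I_n.+1, A == [set x : 'I_n | x < k]].
Definition atomlike n (A : {set 'I_n}) :=
  [exists b : 'I_n, (b.+2 <= n) && (A == [set x : 'I_n | (x < b) || ((x : nat) == b.+1)])].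
Definition GoodS n : {set {set 'I_n}} := [set A | ~~ initial A && ~~ atomlike A].

Definition sigR n (R : relS n) : {set {set 'I_n}} :=
  [set A in GoodS n | [exists v, exists i, exists j,
       [&& onedesc v i j, firstblock v i == A & R (v, dsw v i j)]]].

Lemma onedesc_good n (R : relS n) (v : {perm 'I_n}) (i j : 'I_n) :
  essential R -> onedesc v i j -> R (v, dsw v i j) -> firstblock v i \in GoodS n.
Proof.
move=> ess o r; have o0 := o; case/and3P: o0 => /eqP hj hv nd.
have fb : forall x, (x \in firstblock v i) = ((v^-1)%g x <= i) by move=> x; rewrite inE.
have vi : v i \in firstblock v i by rewrite fb permK.
have vj : v j \notin firstblock v i by rewrite fb permK -ltnNge hj.
have maxA : forall x, x \in firstblock v i -> x <= v i.
  move=> x; rewrite fb => hx.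
  case: (eqVneq ((v^-1)%g x) i) => e.
    by rewrite -e permKV.
  have hlt : (v^-1)%g x < i by rewrite ltn_neqAle e hx.
  have := mono_block nd erefl hlt; rewrite leqnn permKV => h; exact: ltnW (h isT).
have minC : forall x, x \notin firstblock v i -> v j <= x.
  move=> x; rewrite fb -ltnNge => hx.
  case: (eqVneq ((v^-1)%g x) j) => e.
    by rewrite -e permKV.
  have hlt : j < (v^-1)%g x by move: hx e; rewrite -val_eqE /= hj; lia.
  have := mono_block nd erefl hlt; rewrite permKV => h; apply: ltnW; apply: h.
  by rewrite hj ltnSn orbT.
rewrite inE; apply/andP; split.
  apply/negP => /existsP [k /eqP E].
  move: vi vj; rewrite E !inE => h1; move: (ltn_trans hv h1) => ->; done.
apply/negP => /existsP [b /andP [hb /eqP E]].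
have hb1 : b.+1 < n by lia.
pose b1 := Ordinal hb1.
have m1 : b1 \in firstblock v i by rewrite E inE /= eqxx orbT.
have m2 : b \notin firstblock v i by rewrite E inE ltnn /=; lia.
have e1 : (v i : nat) = b.+1.
  have := maxA _ m1; move: vi; rewrite E inE /=; case/orP => h; [lia|]; move/eqP: h; lia.
have e2 : (v j : nat) = b.
  have := minC _ m2; move: vj; rewrite E inE /= negb_or => /andP [h _]; lia.
move/forallP: ess => /(_ i) /forallP /(_ j) /forallP /(_ v) /implyP.
by rewrite /= hj eqxx e1 e2 eqxx orbT => /(_ isT); rewrite /dsw r.
Qed.

Lemma valO n (x : 'I_n) : \val x = nat_of_ord x.
Proof. by []. Qed.

Lemma sigR_H n (R R' : relS n) : essential R -> sigR R \subset sigR R' ->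
  forall v i j, onedesc v i j -> R (v, dsw v i j) -> R' (v, dsw v i j).
Proof.
move=> ess sub v i j o r.
have g := onedesc_good ess o r.
have : firstblock v i \in sigR R.
  rewrite inE g /=; apply/existsP; exists v; apply/existsP; exists i; apply/existsP; exists j.
  by rewrite o eqxx r.
move/(subsetP sub); rewrite inE => /andP [_ /existsP [v' /existsP [i' /existsP [j' /and3P [o' /eqP e r']]]]].
have [ev ei] := onedesc_uniq o' o e; subst v' i'.
have ej : j' = j.
  case/and3P: o => /eqP h1 _ _; case/and3P: o' => /eqP h2 _ _.
  have e2 : (j' : nat) = j by rewrite h1 h2.
  exact: val_inj e2.
by subst j'.
Qed.

Lemma sigR_inj n : {in essential_congruences n &, injective (@sigR n)}.
Proof.
move=> R R'; rewrite !inE => /andP [lR eR] /andP [lR' eR'] E.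
have s1 : sigR R \subset sigR R' by rewrite E.
have s2 : sigR R' \subset sigR R by rewrite E.
apply/ffunP => [[x y]]; apply/idP/idP => h.
  exact: (determ lR lR' (sigR_H eR s1) h).
exact: (determ lR' lR (sigR_H eR' s2) h).
Qed.

Lemma card_sets n : #|{set 'I_n}| = 2 ^ n.
Proof. by rewrite -cardsT -powersetT card_powerset cardsT card_ord. Qed.

Lemma card_nonGood n : 0 < n -> 2 * n <= #|~: GoodS n|.
Proof.
move=> n0.
pose g (s : 'I_n.+1 + 'I_n.-1) : {set 'I_n} :=
  match s with
  | inl k => [set x : 'I_n | x < k]
  | inr b => [set x : 'I_n | (x < b) || ((x : nat) == b.+1)]
  end.
have mem : forall (A B : {set 'I_n}) (x : 'I_n), x \in A -> x \notin B -> A <> B.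
  by move=> A B x h1 h2 e; subst B; rewrite h1 in h2.
have ginj : injective g.
  case=> [k|b] [k'|b'] /= E.
  - congr inl; apply/val_inj/eqP; apply: contraT; rewrite neq_ltn => /orP [] h.
      have hk : (k : nat) < n by have := ltn_ord k'; move: h; rewrite !valO; lia.
      by exfalso; apply: (mem _ _ (Ordinal hk) _ _ (esym E)); rewrite !inE /= ?ltnn.
    have hk : (k' : nat) < n by have := ltn_ord k; move: h; rewrite !valO; lia.
    by exfalso; apply: (mem _ _ (Ordinal hk) _ _ E); rewrite !inE /= ?ltnn.
  - exfalso.
    have hb1 : b'.+1 < n by have := ltn_ord b'; lia.
    have hb : (b' : nat) < n by lia.
    have : Ordinal hb1 \in [set x : 'I_n | x < k] by rewrite E !inE /= eqxx orbT.
    rewrite inE /= => h.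
    by exfalso; apply: (mem _ _ (Ordinal hb) _ _ E); rewrite !inE /= ?ltnn; lia.
  - exfalso.
    have hb1 : b.+1 < n by have := ltn_ord b; lia.
    have hb : (b : nat) < n by lia.
    have : Ordinal hb1 \in [set x : 'I_n | x < k'] by rewrite -E !inE /= eqxx orbT.
    rewrite inE /= => h.
    by exfalso; apply: (mem _ _ (Ordinal hb) _ _ (esym E)); rewrite !inE /= ?ltnn; lia.
  - case: (ltngtP b b') => h; [exfalso|exfalso|by congr inr; apply: val_inj].
      have hb : (b : nat) < n by have := ltn_ord b; lia.
      by exfalso; apply: (mem _ _ (Ordinal hb) _ _ (esym E)); rewrite !inE /= ?ltnn ?h //; lia.
    have hb : (b' : nat) < n by have := ltn_ord b'; lia.
    by exfalso; apply: (mem _ _ (Ordinal hb) _ _ E); rewrite !inE /= ?ltnn ?h //; lia.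
have : #|[set g s | s in predT]| <= #|~: GoodS n|.
  apply: subset_leq_card; apply/subsetP => A /imsetP [s _ ->].
  rewrite !inE negb_and !negbK; case: s => [k|b] /=.
    by apply/orP; left; apply/existsP; exists k.
  apply/orP; right.
  have hb : (b : nat) < n by have := ltn_ord b; lia.
  apply/existsP; exists (Ordinal hb) => /=.
  have := ltn_ord b; rewrite eqxx andbT; lia.
rewrite card_imset // (_ : #|predT| = #|{: 'I_n.+1 + 'I_n.-1}|) // card_sum !card_ord.
by lia.
Qed.

Lemma upper n : 0 < n -> #|essential_congruences n| <= 2 ^ (2 ^ n - 2 * n).
Proof.
move=> n0.
have h1 : #|essential_congruences n| <= #|powerset (GoodS n)|.
  rewrite -(card_in_imset (@sigR_inj n)); apply: subset_leq_card.
  apply/subsetP => S /imsetP [R _ ->]; rewrite inE.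
  by apply/subsetP => A; rewrite inE => /andP [].
apply: (leq_trans h1); rewrite card_powerset leq_exp2l //.
have := cardsC (GoodS n); rewrite card_sets.
have := card_nonGood n0; lia.
Qed.

Lemma xt_dsw n (x : {perm 'I_n}) (a b : 'I_n) :
  (x^-1)%g b = ((x^-1)%g a).+1 :> nat ->
  (x * tperm a b)%g = dsw x ((x^-1)%g a) ((x^-1)%g b).
Proof.
move=> h; apply/permP => k; rewrite permM dsw_val.
have nab : a != b by apply/eqP => e; move: h; rewrite e; lia.
case: tpermP => [->|->| h1 h2]; rewrite ?permKV ?tpermL ?tpermR //.
rewrite tpermD //.
- by apply/eqP => e; apply: h1; rewrite e permK.
- by apply/eqP => e; apply: h2; rewrite e permK.
Qed.

Definition adjF n (z0 zN : 'I_n) (w : {perm 'I_n}) : bool :=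
  ((w^-1)%g zN == ((w^-1)%g z0).+1 :> nat).

Definition leftset n (z0 : 'I_n) (w : {perm 'I_n}) : {set 'I_n} :=
  [set v | (w^-1)%g v < (w^-1)%g z0].

Lemma tinv n (w : {perm 'I_n}) (a b v : 'I_n) :
  ((w * tperm a b)^-1)%g v = (w^-1)%g (tperm a b v).
Proof. by rewrite invMg permM tpermV. Qed.

Lemma adjF_t n (z0 zN : 'I_n) (w : {perm 'I_n}) :
  adjF z0 zN (w * tperm z0 zN)%g = ((w^-1)%g z0 == ((w^-1)%g zN).+1 :> nat).
Proof. by rewrite /adjF !tinv tpermL tpermR. Qed.

Lemma mid_bounds n (z0 zN v : 'I_n) : z0 = 0 :> nat -> zN = n.-1 :> nat ->
  v != z0 -> v != zN -> 0 < v /\ v < n.-1.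
Proof.
move=> h0 hN; rewrite -!val_eqE !valO h0 hN => /eqP h1 /eqP h2.
have := ltn_ord v; split; lia.
Qed.

Lemma pos_neq n (w : {perm 'I_n}) (a b : 'I_n) : a != b -> (w^-1)%g a <> (w^-1)%g b :> nat.
Proof. by move=> nab e; move: nab; rewrite (perm_inj (val_inj e)) eqxx. Qed.

Lemma Ladj n (z0 zN : 'I_n) (x : {perm 'I_n}) (v : 'I_n) : adjF z0 zN x ->
  v != z0 -> v != zN -> ((x^-1)%g v < (x^-1)%g z0) = ((x^-1)%g v < (x^-1)%g zN).
Proof.
move=> /eqP h nv0 nvN; have := pos_neq (w:=x) nv0; have := pos_neq (w:=x) nvN; rewrite h => h1 h2.
apply/idP/idP; lia.
Qed.

Lemma Linv n (z0 zN : 'I_n) (x : {perm 'I_n}) (a b : 'I_n) : z0 < zN -> adjF z0 zN x ->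
  invr (x * tperm z0 zN)%g a b = ((a == z0) && (b == zN)) || invr x a b.
Proof.
move=> h0N hx; have hx' := hx; move/eqP: hx' => hx'.
rewrite (xt_dsw hx').
case pp : (pairpos ((x^-1)%g a) ((x^-1)%g b) ((x^-1)%g z0) ((x^-1)%g zN)).
  move: (pp); rewrite /pairpos; case/orP => /andP [/eqP e1 /eqP e2].
    have ea := perm_inj e1; have eb := perm_inj e2; subst a b.
    by rewrite invr_dsw_flip // /invr h0N hx' ltnNge leqnSn !eqxx.
  have ea := perm_inj e1; have eb := perm_inj e2; subst a b.
  have nz : zN != z0 by rewrite neq_ltn h0N orbT.
  by rewrite /invr ltnNge (ltnW h0N) /= (negbTE nz).
rewrite invr_dsw_pres ?pp //.
case: (eqVneq a z0) => [ea|] //=; case: (eqVneq b zN) => [eb|] //=.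
by subst; move: pp; rewrite /pairpos !eqxx.
Qed.

Lemma adj_up n (z0 zN : 'I_n) (x w : {perm 'I_n}) : z0 = 0 :> nat -> zN = n.-1 :> nat ->
  z0 < zN -> adjF z0 zN x -> weak_le x w -> ~~ invr w z0 zN -> adjF z0 zN w.
Proof.
move=> h0 hN h0N ax lxw; rewrite /invr h0N /= -leqNgt => hle.
have nz : z0 != zN by rewrite neq_ltn h0N.
have hlt : (w^-1)%g z0 < (w^-1)%g zN.
  by rewrite ltn_neqAle hle andbT; apply/eqP => e; apply: (pos_neq (w:=w) nz); rewrite e.
rewrite /adjF; apply: contraT => ne.
have hp : ((w^-1)%g z0).+1 < n by have := ltn_ord ((w^-1)%g zN); lia.
pose p := Ordinal hp; pose v := w p.
have vp : (w^-1)%g v = p by rewrite permK.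
have nv0 : v != z0 by apply/eqP => e; move: vp; rewrite e => /(congr1 val) /=; lia.
have nvN : v != zN by apply/eqP => e; move: vp; rewrite e => /(congr1 val) /=; move: ne; lia.
have [mv1 mv2] := mid_bounds h0 hN nv0 nvN.
case: (boolP ((x^-1)%g v < (x^-1)%g z0)) => hl.
  have : invr x z0 v by rewrite /invr hl h0 mv1.
  move/weak_leP: lxw => lxw /lxw; rewrite /invr vp /=; lia.
have hr : (x^-1)%g zN < (x^-1)%g v.
  move: hl; rewrite (Ladj ax nv0 nvN) -leqNgt leq_eqVlt => /orP [/eqP e|] //.
  by exfalso; apply: (pos_neq (w:=x) nvN); rewrite e.
have : invr x v zN by rewrite /invr hr hN mv2.
move/weak_leP: lxw => lxw /lxw; rewrite /invr vp /=; move: ne; lia.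
Qed.

Lemma adj_down n (z0 zN : 'I_n) (y w : {perm 'I_n}) : z0 = 0 :> nat -> zN = n.-1 :> nat ->
  z0 < zN -> ((y^-1)%g z0 == ((y^-1)%g zN).+1 :> nat) -> weak_le w y -> invr w z0 zN ->
  ((w^-1)%g z0 == ((w^-1)%g zN).+1 :> nat).
Proof.
move=> h0 hN h0N /eqP ay lwy /andP [_ hlt].
apply: contraT => ne.
have hp : ((w^-1)%g zN).+1 < n by have := ltn_ord ((w^-1)%g z0); lia.
pose p := Ordinal hp; pose v := w p.
have vp : (w^-1)%g v = p by rewrite permK.
have nvN : v != zN by apply/eqP => e; move: vp; rewrite e => /(congr1 val) /=; lia.
have nv0 : v != z0 by apply/eqP => e; move: vp; rewrite e => /(congr1 val) /=; move: ne; lia.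
have [mv1 mv2] := mid_bounds h0 hN nv0 nvN.
have i1 : invr w z0 v by rewrite /invr vp h0 mv1 /=; move: ne hlt; lia.
have i2 : invr w v zN by rewrite /invr vp hN mv2 /=; lia.
move/weak_leP: lwy => lwy; move: (lwy _ _ i1) (lwy _ _ i2).
rewrite /invr => /andP [_ j1] /andP [_ j2].
by move: j1 j2; rewrite ay; lia.
Qed.

Lemma Lleft n (z0 zN : 'I_n) (a b : {perm 'I_n}) : z0 = 0 :> nat -> zN = n.-1 :> nat ->
  z0 < zN -> adjF z0 zN a -> adjF z0 zN b -> weak_le a b -> leftset z0 a = leftset z0 b.
Proof.
move=> h0 hN h0N aa ab lab; apply/setP => v; rewrite !inE.
case: (eqVneq v z0) => [->|nv0]; first by rewrite !ltnn.
case: (eqVneq v zN) => [->|nvN].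
  by move/eqP: aa => ->; move/eqP: ab => ->; rewrite ltnNge leqnSn ltnNge leqnSn.
have [mv1 mv2] := mid_bounds h0 hN nv0 nvN.
move/weak_leP: lab => lab.
case: (boolP ((a^-1)%g v < (a^-1)%g z0)) => hl.
  have : invr a z0 v by rewrite /invr hl h0 mv1.
  by move/lab; rewrite /invr => /andP [_ ->].
have hr : (a^-1)%g zN < (a^-1)%g v.
  move: hl; rewrite (Ladj aa nv0 nvN) -leqNgt leq_eqVlt => /orP [/eqP e|] //.
  by exfalso; apply: (pos_neq (w:=a) nvN); rewrite e.
have : invr a v zN by rewrite /invr hr hN mv2.
move/lab; rewrite /invr => /andP [_ h]; move/eqP: ab => ab.
apply/esym/negbTE; rewrite -leqNgt; move: h; rewrite ab; lia.
Qed.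

Definition RS n (z0 zN : 'I_n) (S : {set {set 'I_n}}) (x y : {perm 'I_n}) : bool :=
  [|| x == y, [&& adjF z0 zN x, y == (x * tperm z0 zN)%g & leftset z0 x \in S]
    | [&& adjF z0 zN y, x == (y * tperm z0 zN)%g & leftset z0 y \in S]].

Lemma RS_sym n (z0 zN : 'I_n) (S : {set {set 'I_n}}) x y : RS z0 zN S x y -> RS z0 zN S y x.
Proof.
rewrite /RS eq_sym; case/or3P => [->|->|->] //; by rewrite ?orbT.
Qed.

Lemma tt_inv n (z0 zN : 'I_n) (w : {perm 'I_n}) :
  (w * tperm z0 zN * tperm z0 zN)%g = w.
Proof. by rewrite -mulgA tperm2 mulg1. Qed.

Lemma le_xt n (z0 zN : 'I_n) (x : {perm 'I_n}) : z0 < zN -> adjF z0 zN x ->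
  weak_le x (x * tperm z0 zN)%g.
Proof. by move=> h ax; apply/weak_leP => a b h1; rewrite Linv // h1 orbT. Qed.

Lemma join_up n (z0 zN : 'I_n) (S : {set {set 'I_n}}) (x z j1 j2 : {perm 'I_n}) :
  z0 = 0 :> nat -> zN = n.-1 :> nat -> z0 < zN ->
  adjF z0 zN x -> leftset z0 x \in S ->
  is_join x z j1 -> is_join (x * tperm z0 zN)%g z j2 -> RS z0 zN S j1 j2.
Proof.
move=> h0 hN h0N ax lS hj1 hj2.
set y := (x * tperm z0 zN)%g in hj2.
have lxy : weak_le x y := le_xt h0N ax.
have l12 : weak_le j1 j2 :=
  is_join_min hj1 (weak_le_trans lxy (is_join_le1 hj2)) (is_join_le2 hj2).
case: (boolP (invr j1 z0 zN)) => hj.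
  have l21 : weak_le j2 j1.
    apply: (is_join_min hj2 _ (is_join_le2 hj1)).
    apply/weak_leP => a b; rewrite /y Linv //; case/orP.
      by case/andP => /eqP -> /eqP ->.
    by move/weak_leP: (is_join_le1 hj1); apply.
  by rewrite /RS (weak_le_anti l12 l21) eqxx.
have aj1 := adj_up h0 hN h0N ax (is_join_le1 hj1) hj.
set j1t := (j1 * tperm z0 zN)%g.
have l2t : weak_le j2 j1t.
  apply: (is_join_min hj2).
    apply/weak_leP => a b; rewrite /y /j1t !Linv //; case/orP => [-> //|h].
    by move/weak_leP: (is_join_le1 hj1) => /(_ _ _ h) ->; rewrite orbT.
  exact: weak_le_trans (is_join_le2 hj1) (le_xt h0N aj1).
case: (boolP (invr j2 z0 zN)) => h2.
  have lt2 : weak_le j1t j2.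
    apply/weak_leP => a b; rewrite /j1t Linv //; case/orP.
      by case/andP => /eqP -> /eqP ->.
    by move/weak_leP: l12; apply.
  rewrite /RS (weak_le_anti l2t lt2) /j1t eqxx aj1 /=.
  by rewrite -(Lleft h0 hN h0N ax aj1 (is_join_le1 hj1)) lS orbT.
have l21 : weak_le j2 j1.
  apply/weak_leP => a b h; move/weak_leP: l2t => /(_ _ _ h); rewrite /j1t Linv //.
  case/orP => // /andP [/eqP ea /eqP eb]; subst a b; by rewrite h in h2.
by rewrite /RS (weak_le_anti l12 l21) eqxx.
Qed.

Lemma meet_up n (z0 zN : 'I_n) (S : {set {set 'I_n}}) (x z m1 m2 : {perm 'I_n}) :
  z0 = 0 :> nat -> zN = n.-1 :> nat -> z0 < zN ->
  adjF z0 zN x -> leftset z0 x \in S ->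
  is_meet x z m1 -> is_meet (x * tperm z0 zN)%g z m2 -> RS z0 zN S m1 m2.
Proof.
move=> h0 hN h0N ax lS hm1 hm2.
set y := (x * tperm z0 zN)%g in hm2.
have lxy : weak_le x y := le_xt h0N ax.
have l12 : weak_le m1 m2 :=
  is_meet_min hm2 (weak_le_trans (is_meet_le1 hm1) lxy) (is_meet_le2 hm1).
case: (boolP (invr m2 z0 zN)) => h2; last first.
  have l2x : weak_le m2 x.
    apply/weak_leP => a b h; move/weak_leP: (is_meet_le1 hm2) => /(_ _ _ h).
    rewrite /y Linv //; case/orP => // /andP [/eqP ea /eqP eb]; subst a b.
    by rewrite h in h2.
  have l21 := is_meet_min hm1 l2x (is_meet_le2 hm2).
  by rewrite /RS (weak_le_anti l12 l21) eqxx.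
have ay : ((y^-1)%g z0 == ((y^-1)%g zN).+1 :> nat).
  by rewrite /y !tinv tpermL tpermR.
have am2 := adj_down h0 hN h0N ay (is_meet_le1 hm2) h2.
set m2t := (m2 * tperm z0 zN)%g.
have am2t : adjF z0 zN m2t by rewrite /m2t adjF_t.
have em2 : m2 = (m2t * tperm z0 zN)%g by rewrite /m2t tt_inv.
have inv2 : forall a b, invr m2 a b = ((a == z0) && (b == zN)) || invr m2t a b.
  by move=> a b; rewrite {1}em2 Linv.
have n2t : ~~ invr m2t z0 zN.
  by rewrite /invr; move/eqP: am2t => ->; apply/negP => /andP [_ h]; lia.
have l2tx : weak_le m2t x.
  apply/weak_leP => a b h.
  have h' : invr m2 a b by rewrite inv2 h orbT.
  move/weak_leP: (is_meet_le1 hm2) => /(_ _ _ h'); rewrite /y Linv //.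
  case/orP => // /andP [/eqP ea /eqP eb]; subst a b; by rewrite h in n2t.
have l2tz : weak_le m2t z.
  apply/weak_leP => a b h.
  have h' : invr m2 a b by rewrite inv2 h orbT.
  by move/weak_leP: (is_meet_le2 hm2); apply.
have l2t1 := is_meet_min hm1 l2tx l2tz.
case: (boolP (invr m1 z0 zN)) => h1.
  have l21 : weak_le m2 m1.
    apply/weak_leP => a b; rewrite inv2; case/orP.
      by case/andP => /eqP -> /eqP ->.
    by move/weak_leP: l2t1; apply.
  by rewrite /RS (weak_le_anti l12 l21) eqxx.
have l1t : weak_le m1 m2t.
  apply/weak_leP => a b h; move/weak_leP: l12 => /(_ _ _ h); rewrite inv2.
  case/orP => // /andP [/eqP ea /eqP eb]; subst a b; by rewrite h in h1.
have e1 : m1 = m2t := weak_le_anti l1t l2t1.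
rewrite /RS e1 am2t -em2 eqxx /=.
by rewrite (Lleft h0 hN h0N am2t ax l2tx) lS orbT.
Qed.

Definition RSf n (z0 zN : 'I_n) (S : {set {set 'I_n}}) : relS n :=
  [ffun p => RS z0 zN S p.1 p.2].

Lemma RS_trans n (z0 zN : 'I_n) (S : {set {set 'I_n}}) x y z :
  RS z0 zN S x y -> RS z0 zN S y z -> RS z0 zN S x z.
Proof.
move=> h1 h2; have refl : forall u, RS z0 zN S u u by move=> u; rewrite /RS eqxx.
case/or3P: (h1) => [/eqP -> // | /and3P [ax /eqP ey _] | /and3P [ay /eqP ex _]].
  case/or3P: h2 => [/eqP <- // | /and3P [ay _ _] | /and3P [az /eqP ey' _]].
    by move: ay; rewrite ey adjF_t; move/eqP: ax => ax; rewrite ax; lia.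
  by have -> : x = z by apply: (mulIg (tperm z0 zN)); rewrite -ey -ey'.
case/or3P: h2 => [/eqP <- // | /and3P [_ /eqP ez _] | /and3P [az /eqP ey' _]].
  by rewrite ex -ez.
by move: ay; rewrite ey' adjF_t; move/eqP: az => az; rewrite az; lia.
Qed.

Lemma join_uniq n (x z j1 j2 : {perm 'I_n}) : is_join x z j1 -> is_join x z j2 -> j1 = j2.
Proof.
move=> h1 h2; apply: weak_le_anti.
  exact: is_join_min h1 (is_join_le1 h2) (is_join_le2 h2).
exact: is_join_min h2 (is_join_le1 h1) (is_join_le2 h1).
Qed.

Lemma meet_uniq n (x z m1 m2 : {perm 'I_n}) : is_meet x z m1 -> is_meet x z m2 -> m1 = m2.
Proof.
move=> h1 h2; apply: weak_le_anti.
  exact: is_meet_min h2 (is_meet_le1 h1) (is_meet_le2 h1).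
exact: is_meet_min h1 (is_meet_le1 h2) (is_meet_le2 h2).
Qed.

Lemma RS_lc n (z0 zN : 'I_n) (S : {set {set 'I_n}}) :
  z0 = 0 :> nat -> zN = n.-1 :> nat -> z0 < zN -> lattice_congruence (RSf z0 zN S).
Proof.
move=> h0 hN h0N.
rewrite /lattice_congruence /equivalence_rel; apply/and3P; split.
- apply/and3P; split.
  + by apply/forallP => x; rewrite ffunE /RS eqxx.
  + apply/forallP => x; apply/forallP => y; apply/implyP; rewrite !ffunE; exact: RS_sym.
  + apply/forallP => x; apply/forallP => y; apply/forallP => z.
    apply/implyP => h1; apply/implyP; move: h1; rewrite !ffunE; exact: RS_trans.
- apply/forallP => x; apply/forallP => y; apply/forallP => z; apply/forallP => j1.
  apply/forallP => j2; apply/implyP; rewrite !ffunE /= => h; apply/implyP => hj1; apply/implyP => hj2.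
  case/or3P: h => [/eqP e | /and3P [ax /eqP ey lS] | /and3P [ay /eqP ex lS]].
  + by subst y; rewrite (join_uniq hj1 hj2) /RS eqxx.
  + by subst y; apply: join_up hj1 hj2.
  + by subst x; apply: RS_sym; apply: join_up hj2 hj1.
- apply/forallP => x; apply/forallP => y; apply/forallP => z; apply/forallP => j1.
  apply/forallP => j2; apply/implyP; rewrite !ffunE /= => h; apply/implyP => hj1; apply/implyP => hj2.
  case/or3P: h => [/eqP e | /and3P [ax /eqP ey lS] | /and3P [ay /eqP ex lS]].
  + by subst y; rewrite (meet_uniq hj1 hj2) /RS eqxx.
  + by subst y; apply: meet_up hj1 hj2.
  + by subst x; apply: RS_sym; apply: meet_up hj2 hj1.
Qed.

Lemma tvals n (z0 zN a b : 'I_n) : tperm z0 zN a = b -> a != b ->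
  (a = z0 /\ b = zN) \/ (a = zN /\ b = z0).
Proof.
move=> e; case: (tpermP z0 zN a) e => [-> <- _ | -> <- _ | _ _ ->].
- by left.
- by right.
- by rewrite eqxx.
Qed.

Lemma RS_ess n (z0 zN : 'I_n) (S : {set {set 'I_n}}) :
  z0 = 0 :> nat -> zN = n.-1 :> nat -> 3 <= n -> essential (RSf z0 zN S).
Proof.
move=> h0 hN hn.
apply/forallP => i; apply/forallP => j; apply/forallP => w; apply/implyP.
case/andP => /eqP hj hc; rewrite ffunE /=.
have nij : i != j by apply/eqP => e; move: hj; rewrite e; lia.
have nw : w i != w j by rewrite (inj_eq perm_inj).
have bad : forall a b : 'I_n, tperm z0 zN a = b -> a != b ->
    ((b : nat) == a.+1) || ((a : nat) == b.+1) -> False.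
  move=> a b e nab; case: (tvals e nab) => [[-> ->]|[-> ->]]; rewrite h0 hN; lia.
apply/negP; case/or3P.
- move/eqP/(congr1 (fun g : {perm 'I_n} => g i)); rewrite permM tpermL => e.
  by move: nw; rewrite {1}e eqxx.
- case/and3P => _ /eqP /(congr1 (fun g : {perm 'I_n} => g i)); rewrite !permM tpermL => e _.
  exact: (bad _ _ (esym e) nw hc).
- case/and3P => _ /eqP /(congr1 (fun g : {perm 'I_n} => g i)); rewrite !permM tpermL => e _.
  apply: (bad _ _ (esym e)); first by rewrite eq_sym.
  by rewrite orbC.
Qed.

Definition middle n (z0 zN : 'I_n) : {set 'I_n} := [set v | (v != z0) && (v != zN)].

Lemma witness n (z0 zN : 'I_n) (L : {set 'I_n}) : z0 = 0 :> nat -> zN = n.-1 :> nat -> 3 <= n ->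
  L \subset middle z0 zN -> exists w, adjF z0 zN w && (leftset z0 w == L).
Proof.
move=> h0 hN hn sL.
have z0L : z0 \notin L by apply/negP => /(subsetP sL); rewrite inE eqxx.
have zNL : zN \notin L by apply/negP => /(subsetP sL); rewrite inE eqxx andbF.
have nz : z0 != zN by rewrite -val_eqE !valO h0 hN; lia.
pose key (v : 'I_n) : nat :=
  if v \in L then (v : nat) else if v == z0 then n else if v == zN then n.+1 else n.+2 + v.
have keyL : forall v, (key v < n) = (v \in L).
  move=> v; rewrite /key; case: ifP => h; first by rewrite ltn_ord.
  case: ifP => _; first lia. case: ifP => _; lia.
have kinj : forall x y, key x = key y -> x = y.
  move=> x y e.
  case: (boolP (x \in L)) => hx; case: (boolP (y \in L)) => hy.
  - by move: e; rewrite /key hx hy => /val_inj.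
  - by move/negP: hy; rewrite -keyL -e keyL hx => h; exfalso; apply: h.
  - by move/negP: hx; rewrite -keyL e keyL hy => h; exfalso; apply: h.
  move: e; rewrite /key (negbTE hx) (negbTE hy).
  case: (eqVneq x z0) => hx0; case: (eqVneq y z0) => hy0;
    case: (eqVneq x zN) => hxN; case: (eqVneq y zN) => hyN; move=> //= e.
  all: try (by rewrite hx0 hy0).
  all: try (by rewrite hxN hyN).
  all: try lia.
  all: try (by move: nz; rewrite -hx0 -hxN eqxx).
  all: try (by move: nz; rewrite -hy0 -hyN eqxx).
  apply: val_inj => /=; lia.
pose bef := [rel x y : 'I_n | key x < key y].
have irr : irreflexive bef by move=> x; rewrite /= ltnn.
have trb : transitive bef by move=> y x z /= h1 h2; apply: ltn_trans h1 h2.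
have tot : forall x y, x != y -> bef x y || bef y x.
  move=> x y nxy /=; rewrite -neq_ltn; apply: contra nxy => /eqP /kinj ->; done.
have [s Hs] := realize_bef irr trb tot.
have k0 : key z0 = n by rewrite /key (negbTE z0L) eqxx.
have kN : key zN = n.+1 by rewrite /key (negbTE zNL) eq_sym (negbTE nz) eqxx.
exists (s^-1)%g; rewrite /adjF /leftset !invgK.
apply/andP; split; last first.
  by apply/eqP/setP => v; rewrite inE Hs /= k0 keyL.
have hlt : s z0 < s zN by rewrite Hs /= k0 kN.
apply: contraT => ne.
have hp : (s z0).+1 < n by have := ltn_ord (s zN); lia.
pose v := (s^-1)%g (Ordinal hp).
have sv : s v = Ordinal hp by rewrite permKV.
have h1 : s z0 < s v by rewrite sv /=.
have h2 : s v < s zN by rewrite sv /=; lia.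
move: h1 h2; rewrite !Hs /= k0 kN; lia.
Qed.

Lemma RSf_inj n (z0 zN : 'I_n) : z0 = 0 :> nat -> zN = n.-1 :> nat -> 3 <= n ->
  {in powerset (powerset (middle z0 zN)) &, injective (RSf z0 zN)}.
Proof.
move=> h0 hN hn.
have nz : z0 != zN by rewrite -val_eqE !valO h0 hN; lia.
have key : forall S S', S \in powerset (powerset (middle z0 zN)) -> RSf z0 zN S = RSf z0 zN S' ->
    forall L, L \in S -> L \in S'.
  move=> S S' hS E L hL.
  have sL : L \subset middle z0 zN by move: hS; rewrite inE => /subsetP /(_ _ hL); rewrite inE.
  have [w /andP [aw /eqP lw]] := witness h0 hN hn sL.
  have : RSf z0 zN S (w, (w * tperm z0 zN)%g) by rewrite ffunE /RS aw eqxx lw hL orbT.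
  rewrite E ffunE /RS /= => /or3P [| /and3P [_ _ hl] | /and3P [a2 _ _]].
  - move/eqP/(congr1 (fun g : {perm 'I_n} => g^-1%g z0)).
    rewrite tinv tpermL => /perm_inj e; by rewrite e eqxx in nz.
  - by rewrite -lw.
  - by move: a2 aw; rewrite adjF_t /adjF => /eqP h1 /eqP h2; lia.
move=> S S' hS hS' E; apply/setP => L; apply/idP/idP.
  exact: key hS E L.
exact: key hS' (esym E) L.
Qed.

Lemma lower n : 3 <= n -> 2 ^ (2 ^ (n - 2)) <= #|essential_congruences n|.
Proof.
move=> hn.
have h0n : 0 < n by lia.
have hNn : n.-1 < n by lia.
pose z0 := Ordinal h0n; pose zN := Ordinal hNn.
have h0 : z0 = 0 :> nat by [].
have hN : zN = n.-1 :> nat by [].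
have h0N : z0 < zN by rewrite /= ; lia.
have nz : z0 != zN by rewrite -val_eqE !valO h0 hN; lia.
have cm : #|middle z0 zN| = n - 2.
  have : middle z0 zN = ~: [set z0; zN].
    by apply/setP => v; rewrite !inE negb_or.
  move=> ->.
  have hc : #|[set z0; zN]| + #|~: [set z0; zN]| = n by rewrite cardsC card_ord.
  move: hc; rewrite cards2 nz; change ((true : nat).+1) with 2 => hc.
  apply/eqP; rewrite -(eqn_add2l 2) hc; apply/eqP; lia.
rewrite -cm -!card_powerset -(card_in_imset (RSf_inj h0 hN hn)).
apply: subset_leq_card; apply/subsetP => R /imsetP [S _ ->].
by rewrite inE RS_lc // RS_ess.
Qed.

Theorem mainTheorem8 (n : nat) (hn : 3 <= n) :
  2 ^ (2 ^ (n - 2)) <= #|essential_congruences n| <= 2 ^ (2 ^ n - 2 * n).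
Proof.
by rewrite lower // upper //; lia.
Qed.
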